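(* Let $G$ be a finite graph and $\mathbf{Y}=\lim_{z\to\infty}\mathbf{Y}(z)\in[0,\infty]^{\vec E}$ (a monotone limit). Then $\mathbf{Y}$ is the smallest solution in $[0,\infty]^{\vec E}$ of the fixed point equation $\mathbf{Y}=\mathcal{Q}_G(\mathcal{R}_G(\mathbf{Y}))$.
   Context: $\vec E$: directed edges; $\partial u$: neighbours of $u$; empty sums are $0$. $\mathbf{Y}(z)\in(0,\infty)^{\vec E}$ is the unique solution of $Y_{u\to v}=z/(1+\sum_{w\in\partial u\setminus v}Y_{w\to u})$ (the limit of LABP), and it is non-decreasing in $z$. $\mathcal{R}_G:[0,\infty]^{\vec E}\to[0,1]^{\vec E}$ is $\mathcal{R}_{u\to v}(\mathbf{Y})=1/(1+\sum_{w\in\partial u\setminus v}Y_{w\to u})$, with value $0$ if some $Y_{w\to u}=\infty$, $w\in\partial u\setminus v$. $\mathcal{Q}_G:[0,1]^{\vec E}\to(0,\infty]^{\vec E}$ is $\mathcal{Q}_{u\to v}(\mathbf{X})=1/\sum_{w\in\partial u\setminus v}X_{w\to u}$ with $1/0=\infty$ (so $\mathcal{Q}_{u\to v}(\mathbf{X})=\infty$ if all these $X_{w\to u}$ are $0$ or the sum is empty). Order is componentwise. *)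

(* Defs.v *)
From Stdlib Require Import Bool Reals List Arith.
Import ListNotations.
Open Scope R_scope.

(* Extended nonnegative-real values: [0,oo] is represented by xR with
   Fin r (r >= 0 imposed separately) and Inf = +oo. *)
Inductive xR : Type := Fin (r : R) | Inf.

Definition xle (a b : xR) : Prop :=
  match a, b with
  | Fin x, Fin y => x <= y
  | _, Inf => True
  | Inf, Fin _ => False
  end.

Definition xnonneg (a : xR) : Prop :=
  match a with Fin r => 0 <= r | Inf => True end.

Definition xadd (a b : xR) : xR :=
  match a, b with Fin x, Fin y => Fin (x + y) | _, _ => Inf end.

Definition xsum (l : list xR) : xR := fold_right xadd (Fin 0) l.
Definition Rsum (l : list R) : R := fold_right Rplus 0 l.

(* A finite simple graph on vertices 0..n-1 given by a boolean adjacency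
   relation adj (assumed symmetric and irreflexive in the theorem).
   Vectors indexed by directed edges are functions nat -> nat -> _ ;
   only their values on directed edges matter. *)

Definition nbrs (n : nat) (adj : nat -> nat -> bool) (u v : nat) : list nat :=
  filter (fun w => adj w u && negb (Nat.eqb w v)) (seq 0 n).

Definition RG (n : nat) (adj : nat -> nat -> bool) (Y : nat -> nat -> xR)
    (u v : nat) : R :=
  match xsum (map (fun w => Y w u) (nbrs n adj u v)) with
  | Inf => 0
  | Fin s => / (1 + s)
  end.

(* Q_G : [0,1]^E -> (0,oo]^E, with 1/0 = oo (also for empty sums). *)
Definition QG (n : nat) (adj : nat -> nat -> bool) (X : nat -> nat -> R)
    (u v : nat) : xR :=
  let s := Rsum (map (fun w => X w u) (nbrs n adj u v)) in
  if Req_EM_T s 0 then Inf else Fin (/ s).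

Definition tends_to_infty (f : R -> R) (l : xR) : Prop :=
  match l with
  | Fin L => forall eps, 0 < eps -> exists M, forall z, M < z -> Rabs (f z - L) < eps
  | Inf => forall B, exists M, forall z, M < z -> B < f z
  end.

Definition is_edge (n : nat) (adj : nat -> nat -> bool) (u v : nat) : Prop :=
  (u < n)%nat /\ (v < n)%nat /\ adj u v = true.

(* Main.v *)
Require Import Defs.
From Stdlib Require Import Reals List Arith.
From Stdlib Require Import Lra Lia.
From Coquelicot Require Import Coquelicot.
Open Scope R_scope.

Definition toR (a : xR) : Rbar := match a with Fin r => Finite r | Inf => p_infty end.

Lemma tends_lim f l : tends_to_infty f l -> is_lim f p_infty (toR l).
Proof.
  intros H. apply is_lim_spec. destruct l as [L|]; simpl in *.
  - intros eps. destruct (H eps (cond_pos eps)) as [M HM]. exists M. exact HM.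
  - intros M. destruct (H M) as [N HN]. exists N. exact HN.
Qed.

Lemma lim_uniq f a b : is_lim f p_infty a -> is_lim f p_infty b -> a = b.
Proof.
  intros H1 H2. transitivity (Lim f p_infty).
  - symmetry; apply is_lim_unique; auto.
  - apply is_lim_unique; auto.
Qed.

Lemma toR_inj a b : toR a = toR b -> a = b.
Proof. destruct a, b; simpl; intro H; try discriminate; try injection H; intros; subst; auto. Qed.

Lemma Rsum_lim (l: list nat) (F: nat -> R -> R) (G: nat -> R) :
  (forall w, In w l -> is_lim (F w) p_infty (G w)) ->
  is_lim (fun z => Rsum (map (fun w => F w z) l)) p_infty (Rsum (map G l)).
Proof.
  unfold Rsum. induction l as [|a l IH]; simpl; intros H.
  - apply is_lim_const.
  - apply (is_lim_plus (F a) (fun z => fold_right Rplus 0 (map (fun w => F w z) l))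
      _ (G a) (fold_right Rplus 0 (map G l))).
    + apply H; left; auto.
    + apply IH; intros; apply H; right; auto.
    + reflexivity.
Qed.

Lemma xsum_lim (l: list nat) (F: nat -> R -> R) (G: nat -> xR) :
  (forall w, In w l -> is_lim (F w) p_infty (toR (G w))) ->
  is_lim (fun z => Rsum (map (fun w => F w z) l)) p_infty (toR (xsum (map G l))).
Proof.
  unfold Rsum, xsum. induction l as [|a l IH]; simpl; intros H.
  - apply is_lim_const.
  - apply (is_lim_plus (F a) (fun z => fold_right Rplus 0 (map (fun w => F w z) l))
      _ (toR (G a)) (toR (fold_right xadd (Fin 0) (map G l)))).
    + apply H; left; auto.
    + apply IH; intros; apply H; right; auto.
    + destruct (G a); destruct (fold_right xadd (Fin 0) (map G l)); reflexivity.
Qed.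

Lemma Rsum_scal z (f : nat -> R) l :
  Rsum (map (fun w => z * f w) l) = z * Rsum (map f l).
Proof. unfold Rsum; induction l; simpl; [ring| rewrite IHl; ring]. Qed.

Lemma Rsum_nonneg (f : nat -> R) l :
  (forall w, In w l -> 0 <= f w) -> 0 <= Rsum (map f l).
Proof.
  unfold Rsum; induction l; simpl; intros H; [lra|].
  assert (0 <= f a) by (apply H; left; auto).
  assert (0 <= fold_right Rplus 0 (map f l)) by (apply IHl; intros; apply H; right; auto).
  lra.
Qed.

Lemma Rsum_le (f g : nat -> R) l :
  (forall w, In w l -> f w <= g w) -> Rsum (map f l) <= Rsum (map g l).
Proof.
  unfold Rsum; induction l; simpl; intros H; [lra|].
  assert (f a <= g a) by (apply H; left; auto).
  assert (fold_right Rplus 0 (map f l) <= fold_right Rplus 0 (map g l))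
    by (apply IHl; intros; apply H; right; auto).
  lra.
Qed.

Lemma xsum_nonneg (f : nat -> xR) l :
  (forall w, In w l -> xnonneg (f w)) -> xnonneg (xsum (map f l)).
Proof.
  unfold xsum; induction l; simpl; intros H; [lra|].
  assert (H1 : xnonneg (f a)) by (apply H; left; auto).
  assert (H2 : xnonneg (fold_right xadd (Fin 0) (map f l)))
    by (apply IHl; intros; apply H; right; auto).
  destruct (f a); destruct (fold_right xadd (Fin 0) (map f l)); simpl in *; auto; lra.
Qed.

Lemma xsum_bound (l: list nat) (f: nat->xR) (g: nat -> R) c s :
  xsum (map f l) = Fin s ->
  (forall x, In x l -> forall y, f x = Fin y -> g x <= c*y) ->
  Rsum (map g l) <= c*s.
Proof.
  unfold xsum, Rsum. revert s. induction l as [|a l IH]; simpl; intros s H Hb.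
  - injection H; intros <-. rewrite Rmult_0_r; lra.
  - destruct (f a) eqn:Ea; destruct (fold_right xadd (Fin 0) (map f l)) eqn:Er;
      simpl in H; try discriminate.
    injection H; intros <-.
    assert (g a <= c * r) by (apply Hb; auto).
    assert (fold_right Rplus 0 (map g l) <= c * r0)
      by (apply IH; auto; intros; apply Hb; auto).
    rewrite Rmult_plus_distr_l; lra.
Qed.

Lemma in_nbrs n adj u v w : In w (nbrs n adj u v) -> (w < n)%nat /\ adj w u = true.
Proof.
  unfold nbrs. rewrite filter_In, in_seq. intros [H1 H2].
  apply andb_prop in H2. destruct H2. split; [lia|auto].
Qed.

Lemma edge_nbrs n adj u v w : is_edge n adj u v -> In w (nbrs n adj u v) -> is_edge n adj w u.
Proof.
  intros [Hu [Hv Ha]] Hw. apply in_nbrs in Hw. destruct Hw. repeat split; auto.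
Qed.

Lemma argmax {A} (f : A -> R) l : l <> nil -> exists m, In m l /\ forall x, In x l -> f x <= f m.
Proof.
  induction l as [|a l IH]; intros H; [congruence|].
  destruct l as [|b l'].
  - exists a. split; [left; auto|]. intros x [<-|[]]; lra.
  - destruct IH as [m [Hm Hx]]; [discriminate|].
    destruct (Rle_dec (f a) (f m)).
    + exists m. split; [right; auto|]. intros x [<-|Hx']; auto.
    + exists a. split; [left; auto|]. intros x [<-|Hx']; [lra|].
      specialize (Hx x Hx'); lra.
Qed.

Definition edgeb (n : nat) (adj : nat -> nat -> bool) (p : nat * nat) : bool :=
  Nat.ltb (fst p) n && Nat.ltb (snd p) n && adj (fst p) (snd p).

Lemma in_EL n adj a b : is_edge n adj a b ->
  In (a, b) (List.filter (edgeb n adj) (list_prod (seq 0 n) (seq 0 n))).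
Proof.
  intros [Ha [Hb He]]. rewrite filter_In, in_prod_iff, !in_seq. unfold edgeb; simpl.
  split; [lia|]. rewrite He. apply Nat.ltb_lt in Ha. apply Nat.ltb_lt in Hb.
  rewrite Ha, Hb. reflexivity.
Qed.

Lemma EL_in n adj p : In p (List.filter (edgeb n adj) (list_prod (seq 0 n) (seq 0 n))) ->
  is_edge n adj (fst p) (snd p).
Proof.
  rewrite filter_In. unfold edgeb. intros [_ H].
  apply andb_prop in H; destruct H as [H H3]. apply andb_prop in H; destruct H as [H1 H2].
  apply Nat.ltb_lt in H1. apply Nat.ltb_lt in H2. repeat split; auto.
Qed.

Theorem mainTheorem12 (n : nat) (adj : nat -> nat -> bool)
    (Hsym : forall u v, adj u v = adj v u)
    (Hirr : forall u, adj u u = false)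
    (Yz : R -> nat -> nat -> R)
    (HYz : forall z, 0 < z -> forall u v, is_edge n adj u v ->
        0 < Yz z u v /\
        Yz z u v = z / (1 + Rsum (map (fun w => Yz z w u) (nbrs n adj u v))))
    (Ylim : nat -> nat -> xR)
    (Hlim : forall u v, is_edge n adj u v ->
        tends_to_infty (fun z => Yz z u v) (Ylim u v)) :
  (forall u v, is_edge n adj u v ->
      xnonneg (Ylim u v) /\ Ylim u v = QG n adj (RG n adj Ylim) u v) /\
  (forall Y' : nat -> nat -> xR,
      (forall u v, is_edge n adj u v ->
          xnonneg (Y' u v) /\ Y' u v = QG n adj (RG n adj Y') u v) ->
      forall u v, is_edge n adj u v -> xle (Ylim u v) (Y' u v)).
Proof.
  set (S := fun z u v => Rsum (map (fun w => Yz z w u) (nbrs n adj u v))).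
  set (T := fun z u v => Rsum (map (fun w => / (1 + S z w u)) (nbrs n adj u v))).
  assert (Spos : forall u v, is_edge n adj u v -> forall z, 0 < z -> 0 <= S z u v).
  { intros u v He z Hz. unfold S. apply Rsum_nonneg. intros w Hw.
    apply Rlt_le, (HYz z Hz); eapply edge_nbrs; eauto. }
  assert (HYS : forall u v, is_edge n adj u v -> forall z, 0 < z -> Yz z u v = z * / (1 + S z u v)).
  { intros u v He z Hz. destruct (HYz z Hz u v He) as [_ E]. exact E. }
  assert (K3 : forall u v, is_edge n adj u v -> forall z, 0 < z -> S z u v = z * T z u v).
  { intros u v He z Hz. unfold T. rewrite <- Rsum_scal. unfold S at 1. f_equal.
    apply map_ext_in. intros w Hw. apply HYS; auto. eapply edge_nbrs; eauto. }
  assert (Tpos : forall u v, is_edge n adj u v -> forall z, 0 < z -> 0 <= T z u v).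
  { intros u v He z Hz. unfold T. apply Rsum_nonneg. intros w Hw.
    assert (0 <= S z w u) by (apply Spos; auto; eapply edge_nbrs; eauto).
    apply Rlt_le, Rinv_0_lt_compat; lra. }
  assert (Ynn : forall u v, is_edge n adj u v -> xnonneg (Ylim u v)).
  { intros u v He. destruct (Ylim u v) eqn:E; simpl; auto.
    pose proof (tends_lim _ _ (Hlim u v He)) as H. rewrite E in H. simpl in H.
    assert (Hle : Rbar_le 0 r).
    { apply (is_lim_le_loc (fun _ => 0) (fun z => Yz z u v) p_infty 0 r).
      - exists 0. intros z Hz. apply Rlt_le, (HYz z Hz u v He).
      - apply is_lim_const.
      - exact H. }
    exact Hle. }
  assert (K1 : forall u v, is_edge n adj u v ->
     is_lim (fun z => / (1 + S z u v)) p_infty (RG n adj Ylim u v)).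
  { intros u v He.
    assert (HS : is_lim (fun z => S z u v) p_infty
                   (toR (xsum (map (fun w => Ylim w u) (nbrs n adj u v))))).
    { unfold S. apply (xsum_lim _ (fun w z => Yz z w u) (fun w => Ylim w u)).
      intros w Hw. apply tends_lim, Hlim. eapply edge_nbrs; eauto. }
    assert (Hnn : xnonneg (xsum (map (fun w => Ylim w u) (nbrs n adj u v)))).
    { apply xsum_nonneg. intros w Hw. apply Ynn. eapply edge_nbrs; eauto. }
    unfold RG. destruct (xsum (map (fun w => Ylim w u) (nbrs n adj u v))) as [s|];
      simpl in HS, Hnn.
    - replace (Finite (/ (1 + s))) with (Rbar_inv (Finite (1 + s))) by reflexivity.
      apply is_lim_inv.
      + apply (is_lim_plus (fun _ => 1) (fun z => S z u v) _ 1 s); auto.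
        * apply is_lim_const.
        * reflexivity.
      + intro H. injection H. lra.
    - replace (Finite 0) with (Rbar_inv p_infty) by reflexivity.
      apply is_lim_inv; [|discriminate].
      apply (is_lim_plus (fun _ => 1) (fun z => S z u v) _ 1 p_infty); auto.
      * apply is_lim_const.
      * reflexivity. }
  split.
  - intros u v He.
    set (t := Rsum (map (fun w => RG n adj Ylim w u) (nbrs n adj u v))).
    assert (HT : is_lim (fun z => T z u v) p_infty t).
    { unfold T, t. apply (Rsum_lim _ (fun w z => / (1 + S z w u)) (fun w => RG n adj Ylim w u)).
      intros w Hw. apply K1. eapply edge_nbrs; eauto. }
    assert (Hinvz : is_lim (fun z => / z) p_infty 0).
    { replace (Finite 0) with (Rbar_inv p_infty) by reflexivity.
      apply is_lim_inv; [apply is_lim_id|discriminate]. }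
    assert (HD : is_lim (fun z => / z + T z u v) p_infty t).
    { replace (Finite t) with (Finite (0 + t)) by (f_equal; ring).
      apply (is_lim_plus (fun z => / z) (fun z => T z u v) _ 0 t); auto. reflexivity. }
    assert (HY : is_lim (fun z => Yz z u v) p_infty (toR (QG n adj (RG n adj Ylim) u v))).
    { apply is_lim_ext_loc with (fun z => / (/ z + T z u v)).
      - exists 0. intros z Hz. rewrite (HYS u v He z Hz), (K3 u v He z Hz).
        pose proof (Tpos u v He z Hz).
        assert (0 < / z) by (apply Rinv_0_lt_compat; lra).
        assert (0 < z * T z u v + 1) by nra.
        field. repeat split; try lra; nra.
      - unfold QG. fold t. destruct (Req_EM_T t 0) as [e|ne]; simpl.
        + apply is_lim_Rinv_0_right.
          * rewrite e in HD. exact HD.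
          * exists 0. intros z Hz. pose proof (Tpos u v He z Hz).
            assert (0 < / z) by (apply Rinv_0_lt_compat; lra). lra.
        + replace (Finite (/ t)) with (Rbar_inv (Finite t)) by reflexivity.
          apply is_lim_inv; auto. intro H; injection H; auto. }
    assert (Heq : Ylim u v = QG n adj (RG n adj Ylim) u v).
    { apply toR_inj. eapply lim_uniq; [apply tends_lim, Hlim, He | exact HY]. }
    split; [apply Ynn; auto | exact Heq].
  - intros Y' HY'.
    assert (RGnn : forall w a, is_edge n adj w a -> 0 <= RG n adj Y' w a).
    { intros w a He. unfold RG.
      assert (Hx : xnonneg (xsum (map (fun x => Y' x w) (nbrs n adj w a)))).
      { apply xsum_nonneg. intros x Hx. apply HY'. eapply edge_nbrs; eauto. }
      destruct (xsum (map (fun x => Y' x w) (nbrs n adj w a))); simpl in Hx; [|lra].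
      apply Rlt_le, Rinv_0_lt_compat; lra. }
    assert (Ypos : forall a b, is_edge n adj a b -> forall y, Y' a b = Fin y -> 0 < y).
    { intros a b He y Hy. destruct (HY' a b He) as [_ E]. rewrite Hy in E.
      unfold QG in E. destruct (Req_EM_T _ 0) as [e|ne]; [discriminate|].
      injection E; intros ->. apply Rinv_0_lt_compat.
      assert (0 <= Rsum (map (fun w => RG n adj Y' w a) (nbrs n adj a b))).
      { apply Rsum_nonneg. intros w Hw. apply RGnn. eapply edge_nbrs; eauto. }
      lra. }
    assert (Claim : forall z, 0 < z -> forall a b, is_edge n adj a b ->
               xle (Fin (Yz z a b)) (Y' a b)).
    { intros z Hz a b Hab.
      set (r := fun p : nat * nat => match Y' (fst p) (snd p) with
                  | Fin y => Yz z (fst p) (snd p) / y | Inf => 0 end).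
      set (EL := List.filter (edgeb n adj) (list_prod (seq 0 n) (seq 0 n))).
      destruct (argmax r EL) as [m [Hm Hmax]].
      { intro H. pose proof (in_EL n adj a b Hab) as H'. fold EL in H'. rewrite H in H'. exact H'. }
      set (c := r m).
      assert (Hc : forall x y, is_edge n adj x y -> forall yv, Y' x y = Fin yv ->
                   Yz z x y <= c * yv).
      { intros x y Hxy yv Hyv. pose proof (Hmax (x, y) (in_EL _ _ _ _ Hxy)) as H.
        unfold r at 1 in H. simpl in H. rewrite Hyv in H. fold c in H.
        pose proof (Ypos x y Hxy yv Hyv).
        replace (Yz z x y) with (Yz z x y / yv * yv) by (field; lra).
        apply Rmult_le_compat_r; lra. }
      assert (Hc1 : c <= 1).
      { destruct (Rle_dec c 1) as [|Hgt]; auto. exfalso.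
        destruct m as [p q]. pose proof (EL_in n adj _ Hm) as Hpq. simpl in Hpq.
        unfold c, r in Hgt. simpl in Hgt.
        destruct (Y' p q) eqn:Eym; [|lra]. rename r0 into ym.
        assert (Hc' : c = Yz z p q / ym) by (unfold c, r; simpl; rewrite Eym; reflexivity).
        pose proof (Ypos p q Hpq ym Eym) as Hym.
        destruct (HY' p q Hpq) as [_ E]. rewrite Eym in E. unfold QG in E.
        set (s' := Rsum (map (fun w => RG n adj Y' w p) (nbrs n adj p q))) in E.
        destruct (Req_EM_T s' 0) as [e|ne]; [discriminate|].
        injection E; intros Hyms.
        assert (Hs'0 : 0 <= s').
        { apply Rsum_nonneg. intros w Hw. apply RGnn. eapply edge_nbrs; eauto. }
        assert (Hs' : s' <= c * T z p q).
        { unfold T. rewrite <- Rsum_scal. apply Rsum_le. intros w Hw.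
          assert (Hwp : is_edge n adj w p) by (eapply edge_nbrs; eauto).
          assert (HSw : 0 <= S z w p) by (apply Spos; auto).
          unfold RG. destruct (xsum (map (fun x => Y' x w) (nbrs n adj w p))) eqn:Ex.
          - rename r0 into s''.
            assert (Hs'' : 0 <= s'').
            { assert (Hx : xnonneg (xsum (map (fun x => Y' x w) (nbrs n adj w p)))).
              { apply xsum_nonneg. intros x Hx. apply HY'. eapply edge_nbrs; eauto. }
              rewrite Ex in Hx. exact Hx. }
            assert (HSb : S z w p <= c * s'').
            { unfold S. apply (xsum_bound _ (fun x => Y' x w)); auto.
              intros x Hx y Hy. apply Hc; auto. eapply edge_nbrs; eauto. }
            apply Rle_trans with (c * / (c * (1 + s''))).
            + right. field. lra.
            + apply Rmult_le_compat_l; [lra|]. apply Rinv_le_contravar; [lra|]. nra.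
          - apply Rmult_le_pos; [lra|]. apply Rlt_le, Rinv_0_lt_compat; lra. }
        assert (HT0 : 0 <= T z p q) by (apply Tpos; auto).
        assert (Hlt : Yz z p q < c * ym).
        { rewrite (HYS p q Hpq z Hz), (K3 p q Hpq z Hz), Hyms.
          assert (Hs'p : 0 < s') by lra.
          assert (Hpos : 0 < (1 + z * T z p q) * s') by (apply Rmult_lt_0_compat; [pose proof (Rmult_le_pos z (T z p q) (Rlt_le _ _ Hz) HT0); lra | lra]).
          apply (Rmult_lt_reg_r ((1 + z * T z p q) * s')); auto.
          replace (z * / (1 + z * T z p q) * ((1 + z * T z p q) * s')) with (z * s')
            by (field; nra).
          replace (c * / s' * ((1 + z * T z p q) * s')) with (c * (1 + z * T z p q))
            by (field; lra).
          nra. }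
        rewrite Hc' in Hlt.
        replace (Yz z p q / ym * ym) with (Yz z p q) in Hlt by (field; lra). lra. }
      destruct (Y' a b) eqn:Eab; simpl; auto.
      pose proof (Ypos a b Hab r0 Eab). pose proof (Hc a b Hab r0 Eab). nra. }
    intros u v He.
    destruct (Y' u v) eqn:Euv; [|destruct (Ylim u v); exact I].
    pose proof (tends_lim _ _ (Hlim u v He)) as H.
    assert (Hle : Rbar_le (toR (Ylim u v)) r).
    { apply (is_lim_le_loc (fun z => Yz z u v) (fun _ => r) p_infty); auto.
      - exists 0. intros z Hz. pose proof (Claim z Hz u v He) as Hc. rewrite Euv in Hc. exact Hc.
      - apply is_lim_const. }
    destruct (Ylim u v); simpl in *; auto.
Qed.
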